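(* For every $n\in\mathbb{N}$, \[ \mathcal{M}^{(3)}(n)=\min_{1\le s\le t\le n}\mathcal{M}^{(3)}(n,s,t)=\Bigl\lfloor\frac{n^2-18n+101}{108}\Bigr\rfloor+\begin{cases}1,& n\equiv 36\pmod{54},\\ -1,& n\equiv 30 \text{ or } n\equiv 42\pmod{54},\\ 0,&\text{otherwise}.\end{cases} \]
   Context: For real $a>0$ and integers $1\le s\le t\le n$, $\mathcal{M}^{(a)}(n,s,t)$ is the number of ordered triples $T=(x,y,x+\lfloor ay\rfloor)\in\{1,\dots,n\}^3$ such that $T\in(\{1,\dots,s\}\cup\{t+1,\dots,n\})^3$ or $T\in\{s+1,\dots,t\}^3$ (monochromatic generalized Schur triples under the coloring $R^sB^{t-s}R^{n-t}$). For $a=3$ the triples are $(x,y,x+3y)$. *)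

(* Defs.v *)
From mathcomp Require Import all_boot all_algebra.
Set Implicit Arguments. Unset Strict Implicit. Unset Printing Implicit Defensive.

(* Coloring R^s B^(t-s) R^(n-t): k is red iff k <= s or t < k. *)
Definition isRed (s t k : nat) : bool := (k <= s) || (t < k).

Definition mono (s t x y z : nat) : bool :=
  (isRed s t x && isRed s t y && isRed s t z)
  || (~~ isRed s t x && ~~ isRed s t y && ~~ isRed s t z).

Definition M3 (n s t : nat) : nat :=
  \sum_(x < n.+1) \sum_(y < n.+1)
     [&& 1 <= x, 1 <= y, x + 3 * y <= n & mono s t x y (x + 3 * y)].

Definition M3corr (n : nat) : int :=
  if n %% 54 == 36 then 1%R
  else if (n %% 54 == 30) || (n %% 54 == 42) then (-1)%R else 0%R.

Definition M3formula (n : nat) : int :=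
  (Posz ((n ^ 2 + 101 - 18 * n) %/ 108)%N + M3corr n)%R.

(* Main.v *)
Require Import Defs.
From Stdlib Require Import ZArith Lia.
From mathcomp Require Import all_boot all_algebra zify.
Import GRing.Theory Num.Theory.
Set Implicit Arguments. Unset Strict Implicit. Unset Printing Implicit Defensive.

Definition T (m : nat) : nat := \sum_(i < m) (m - 3 * i.+1).

Lemma sumT M m : m <= M -> \sum_(i < M) (m - 3 * i.+1) = T m.
Proof.
elim: M => [|M IH] Hm.
  by have -> : m = 0 by lia.
case: (ltnP M m) => HM.
  by have -> : m = M.+1 by lia.
by rewrite big_ord_recr /= IH //; lia.
Qed.

Lemma sum_lt m q : \sum_(i < m) (i < q : nat) = minn m q.
Proof. elim: m => [|m IH]; first by rewrite big_ord0; lia.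
by rewrite big_ord_recr /= IH; lia. Qed.

Lemma TS m : T m.+1 = T m + m %/ 3.
Proof.
rewrite /T big_ord_recr /=.
have -> : m.+1 - 3 * m.+1 = 0 by lia.
rewrite addn0.
have -> : \sum_(i < m) (m.+1 - 3 * i.+1) = \sum_(i < m) ((m - 3 * i.+1) + (i < m %/ 3 : nat)).
  apply: eq_bigr => i _.
  have := leq_divRL. lia.
rewrite big_split /= sum_lt; lia.
Qed.

Lemma Tk m : exists k, [/\ k <= 1, k <= m %% 3, m %% 3 <= 2 * k &
   6 * T m + 3 * m = m * m + 2 * k].
Proof.
elim: m => [|m [k [H1 H2 H3 H4]]]; first by exists 0; rewrite /T big_ord0.
rewrite TS.
have [Hr|Hr] : m %% 3 = 2 \/ m %% 3 < 2 by lia.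
  by exists 0; split; try lia.
by exists 1; split; try lia.
Qed.

Lemma T_le m : m <= 3 -> T m = 0.
Proof. by move=> H; rewrite /T big1 // => i _; lia. Qed.

Lemma T_mono m m' : m <= m' -> T m <= T m'.
Proof.
move=> H; rewrite -(subnKC H); elim: (m' - m) => [|k IH]; first by rewrite addn0.
by rewrite addnS TS; lia.
Qed.

Lemma cnt N lo hi : \sum_(x < N.+1) ((lo < x) && (x <= hi) : nat) = minn hi N - lo.
Proof.
elim: N => [|N IH]; first by rewrite big_ord_recr big_ord0 /=; lia.
by rewrite big_ord_recr /= IH; lia.
Qed.

Lemma sumG N lo K : lo <= N -> K - 3 * lo <= N - lo ->
  \sum_(y < N.+1) ((lo < y) * (K - 3 * y)) = T (K - 3 * lo).
Proof.
move=> H1 H2.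
rewrite -(big_mkord xpredT (fun y => (lo < y) * (K - 3 * y))).
rewrite (big_cat_nat (leq0n lo.+1)) //=.
rewrite big_nat big1 ?add0n; last by move=> i Hi; lia.
rewrite -{1}[lo.+1]add0n big_addn big_mkord -(sumT (M := N.+1 - lo.+1)); last by lia.
apply: eq_bigr => i _; lia.
Qed.

Lemma inner N b lo hi : hi <= N ->
  \sum_(x < N.+1) ([&& b, lo < x & x <= hi] : nat) = b * (hi - lo).
Proof.
move=> H; case: b => /=; last by rewrite big1.
rewrite mul1n cnt; lia.
Qed.

Lemma sumR N lo H : lo <= N -> H <= N -> H - 4 * lo <= N - lo ->
  \sum_(x < N.+1) \sum_(y < N.+1) ([&& lo < y, lo < x & x <= H - 3 * y] : nat)
  = T (H - 4 * lo).
Proof.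
move=> H1 H2 H3; rewrite exchange_big /=.
rewrite (eq_bigr (fun y : 'I_N.+1 => (lo < y) * ((H - lo) - 3 * y))); last first.
  move=> y _; rewrite inner; last by lia.
  by case: (lo < y) => /=; lia.
rewrite sumG; try lia.
by congr T; lia.
Qed.

Lemma sumR3 N s t : s <= N -> t <= N ->
  \sum_(x < N.+1) \sum_(y < N.+1) ([&& (0 < y) && (y <= s), t < x & x <= N - 3 * y] : nat)
  + T (N - t - 3 * s) = T (N - t).
Proof.
move=> H1 H2; rewrite exchange_big /=.
rewrite (eq_bigr (fun y : 'I_N.+1 => ((0 < y) * ((N - t) - 3 * y)) - ((s < y) * ((N - t) - 3 * y)))); last first.
  move=> y _; rewrite inner; last by lia.
  by case: posnP => Hy; case: leqP => Hs /=; lia.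
have -> : T (N - t - 3 * s) = \sum_(y < N.+1) ((s < y) * ((N - t) - 3 * y)).
  by rewrite sumG //; lia.
rewrite -big_split /=.
rewrite (eq_bigr (fun y : 'I_N.+1 => (0 < y) * ((N - t) - 3 * y))); last first.
  by move=> y _; case: posnP => Hy; case: leqP => Hs /=; lia.
rewrite sumG; try lia.
by congr T; lia.
Qed.

Definition cond n s t x y : nat :=
  [&& 1 <= x, 1 <= y, x + 3 * y <= n & mono s t x y (x + 3 * y)].

Lemma pt n s t x y : 1 <= s -> s <= t -> t <= n ->
  ([&& 0 < y, 0 < x & x <= s - 3 * y] : nat) + [&& s < y, s < x & x <= t - 3 * y]
  + [&& (0 < y) && (y <= s), t < x & x <= n - 3 * y] + [&& t < y, t < x & x <= n - 3 * y]
  <= cond n s t x y.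
Proof. move=> *; rewrite /cond /mono /isRed; lia. Qed.

Lemma pt_eq n s t x y : 1 <= s -> 4 * s <= t -> t <= n -> n < 3 * t + 4 ->
  ([&& 0 < y, 0 < x & x <= s - 3 * y] : nat) + [&& s < y, s < x & x <= t - 3 * y]
  + [&& (0 < y) && (y <= s), t < x & x <= n - 3 * y] + [&& t < y, t < x & x <= n - 3 * y]
  = cond n s t x y.
Proof. move=> *; rewrite /cond /mono /isRed.
case: (leqP x s) => ?; case: (leqP y s) => ?; case: (leqP x t) => ?; case: (leqP y t) => ? /=; lia. Qed.

Lemma M3_split n s t : 1 <= s -> s <= t -> t <= n ->
  \sum_(x < n.+1) \sum_(y < n.+1)
   (([&& 0 < y, 0 < x & x <= s - 3 * y] : nat) + [&& s < y, s < x & x <= t - 3 * y]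
  + [&& (0 < y) && (y <= s), t < x & x <= n - 3 * y] + [&& t < y, t < x & x <= n - 3 * y])
  + T (n - t - 3 * s)
  = T s + T (t - 4 * s) + T (n - t) + T (n - 4 * t).
Proof.
move=> H1 H2 H3.
rewrite (eq_bigr (fun x : 'I_n.+1 =>
  \sum_(y < n.+1) ([&& 0 < y, 0 < x & x <= s - 3 * y] : nat) +
  \sum_(y < n.+1) ([&& s < y, s < x & x <= t - 3 * y] : nat) +
  \sum_(y < n.+1) ([&& (0 < y) && (y <= s), t < x & x <= n - 3 * y] : nat) +
  \sum_(y < n.+1) ([&& t < y, t < x & x <= n - 3 * y] : nat))); last first.
  by move=> x _; rewrite !big_split.
rewrite !big_split /=.
have E1 := @sumR n 0 s. rewrite muln0 subn0 in E1.
rewrite E1 ?sumR; try lia.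
have E3 := @sumR3 n s t.
rewrite -E3; [|lia|lia]. by rewrite -addnA [T (n - 4 * t) + _]addnC !addnA.
Qed.

Lemma M3_cond n s t : M3 n s t = \sum_(x < n.+1) \sum_(y < n.+1) cond n s t x y.
Proof. by []. Qed.

Lemma M3_ge n s t : 1 <= s -> s <= t -> t <= n ->
  T s + T (t - 4 * s) + T (n - t) + T (n - 4 * t) <= M3 n s t + T (n - t - 3 * s).
Proof.
move=> H1 H2 H3; rewrite -M3_split // leq_add2r M3_cond.
apply: leq_sum => x _; apply: leq_sum => y _; exact: pt.
Qed.

Lemma M3_eqn n s t : 1 <= s -> 4 * s <= t -> t <= n -> n < 3 * t + 4 ->
  M3 n s t + T (n - t - 3 * s) = T s + T (t - 4 * s) + T (n - t) + T (n - 4 * t).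
Proof.
move=> H1 H2 H3 H4; rewrite -M3_split //; last by lia.
congr (_ + _); rewrite M3_cond.
apply: eq_bigr => x _; apply: eq_bigr => y _; by rewrite pt_eq.
Qed.


Section ZPart.
Local Unset Implicit Arguments.
Local Open Scope Z_scope.
Lemma keyZ (a b c n w r qa ra qb rb qc rc ka kb kc e d E D2 : Z) :
 0 <= a -> 0 <= b -> 0 <= c -> n = 4*a+b+c -> n = 54*w + r -> 0 <= r < 54 ->
 a = 3*qa+ra -> 0 <= ra < 3 -> 0 <= ka <= 1 -> ka <= ra -> ra <= 2*ka ->
 b = 3*qb+rb -> 0 <= rb < 3 -> 0 <= kb <= 1 -> kb <= rb -> rb <= 2*kb ->
 c = 3*qc+rc -> 0 <= rc < 3 -> 0 <= kc <= 1 -> kc <= rc -> rc <= 2*kc ->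
 e = 18*a + 9 - 4*n -> d = b - c -> (E >= -33*e - (272)) -> (E >= -31*e - (240)) -> (E >= -29*e - (210)) -> (E >= -27*e - (182)) -> (E >= -25*e - (156)) -> (E >= -23*e - (132)) -> (E >= -21*e - (110)) -> (E >= -19*e - (90)) -> (E >= -17*e - (72)) -> (E >= -15*e - (56)) -> (E >= -13*e - (42)) -> (E >= -11*e - (30)) -> (E >= -9*e - (20)) -> (E >= -7*e - (12)) -> (E >= -5*e - (6)) -> (E >= -3*e - (2)) -> (E >= -1*e - (0)) -> (E >= 1*e - (0)) -> (E >= 3*e - (2)) -> (E >= 5*e - (6)) -> (E >= 7*e - (12)) -> (E >= 9*e - (20)) -> (E >= 11*e - (30)) -> (E >= 13*e - (42)) -> (E >= 15*e - (56)) -> (E >= 17*e - (72)) -> (E >= 19*e - (90)) -> (E >= 21*e - (110)) -> (E >= 23*e - (132)) -> (E >= 25*e - (156)) -> (E >= 27*e - (182)) -> (E >= 29*e - (210)) -> (E >= 31*e - (240)) -> (E >= 33*e - (272)) -> (D2 >= -9*d - (20)) -> (D2 >= -7*d - (12)) -> (D2 >= -5*d - (6)) -> (D2 >= -3*d - (2)) -> (D2 >= -1*d - (0)) -> (D2 >= 1*d - (0)) -> (D2 >= 3*d - (2)) -> (D2 >= 5*d - (6)) -> (D2 >= 7*d - (12)) -> (D2 >= 9*d - (20)) ->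
 (r = 36 -> E + 18*D2 + 72*(ka+kb+kc) >= 285) /\
 (r <> 36 -> r <> 30 -> r <> 42 -> E + 18*D2 + 72*(ka+kb+kc) >= 69).
Proof. intros. split; intros; lia. Qed.

Lemma final0 (a b c ka kb kc Ta Tb Tc D corr E D2 n : Z) :
  6*Ta + 3*a = a*a + 2*ka -> 6*Tb + 3*b = b*b + 2*kb -> 6*Tc + 3*c = c*c + 2*kc ->
  n = 4*a+b+c -> 108 * D <= n*n + 101 - 18*n ->
  69 + 216 * corr <= E + 18 * D2 + 72*(ka+kb+kc) ->
  E = (18*a + 9 - 4*n)*(18*a+9-4*n) -> D2 = (b-c)*(b-c) ->
  D + corr <= Ta + Tb + Tc.
Proof.
intros H1 H2 H3 Hn HD K HE HD2.
assert (I : 36*(a*a+b*b+c*c) - 108*(a+b+c) = 2*(n*n+101-18*n) + E + 18*D2 - 283)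
  by (subst; ring).
lia.
Qed.

Lemma sq_lineZ (z j : Z) : z*z >= (2*j+1)*z - j*(j+1).
Proof. assert (z <= j \/ j + 1 <= z) as [h|h] by lia; nia. Qed.


Definition Gf (s t u As Xs Ys : Z) := 18*(As + Xs + Ys + 6*s*u - 9*s*s - 9*s) - ((t+u)*(t+u) - 18*(t+u) + 209).

Lemma caseI (a p w : Z) : 0 <= a -> 0 <= p -> 0 <= w ->
  0 <= Gf (1+a) (4*(1+a)+p) (3*(4*(1+a)+p)+w) ((1+a)*(1+a) - 3*(1+a)) (p*p-3*p) (w*w-3*w).
Proof.
intros. unfold Gf.
assert (0 <= a*p) by (apply Z.mul_nonneg_nonneg; lia). assert (0 <= a*w) by (apply Z.mul_nonneg_nonneg; lia).
assert (0 <= a*a) by (apply Z.mul_nonneg_nonneg; lia).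
assert (0 <= (p-2*w)*(p-2*w)) by apply Z.square_nonneg. assert (0 <= w*w) by apply Z.square_nonneg.
nia.
Qed.

Lemma concave (W w G G0 GW k : Z) : 0 <= w <= W -> 0 < W -> 0 <= G0 -> 0 <= GW -> 0 <= k ->
  W * G = (W - w) * G0 + w * GW + k * (W * w * (W - w)) -> 0 <= G.
Proof.
intros Hw HW H0 H1 Hk I.
assert (0 <= (W - w) * G0) by (apply Z.mul_nonneg_nonneg; lia).
assert (0 <= w * GW) by (apply Z.mul_nonneg_nonneg; lia).
assert (0 <= W * w * (W - w)) by (apply Z.mul_nonneg_nonneg; [apply Z.mul_nonneg_nonneg|]; lia).
assert (0 <= k * (W * w * (W - w))) by (apply Z.mul_nonneg_nonneg; lia).
assert (0 <= W * G) by lia.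
destruct (Z.le_gt_cases 0 G) as [h|h]; [exact h|].
assert (W * G < 0) by (apply Z.mul_pos_neg; lia). lia.
Qed.

Lemma caseII (a p w : Z) : 0 <= a -> 0 <= p -> 0 <= w -> w <= 9*a+3*p+4 ->
  0 <= Gf (1+a) (4*(1+a)+p) (3*(1+a)+4+w) ((1+a)*(1+a) - 3*(1+a)) (p*p-3*p) 0.
Proof.
intros Ha Hp Hw HW.
apply (concave (9*a+3*p+4) w _ (264 - 58*p + 17*p*p + 548*a - 14*a*p + 131*a*a)
  (664 + 222*p + 2*p*p + 1788*a + 196*a*p + 896*a*a) 1); try lia.
- assert (0 <= a*a) by (apply Z.mul_nonneg_nonneg; lia).
  assert (0 <= p*p) by (apply Z.mul_nonneg_nonneg; lia).
  assert (0 <= (a-p)*(a-p)) by apply Z.square_nonneg.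
  assert (0 <= (p-3)*(p-3)) by apply Z.square_nonneg. lia.
- unfold Gf; ring.
Qed.

Lemma caseIII (a p w : Z) : 0 <= a -> 0 <= p -> p <= 3*a+2 -> 0 <= w -> 3*p - 9*a - 2 <= w ->
  0 <= Gf (1+a) (4*(1+a)-1-p) (3*(4*(1+a)-1-p)+w) ((1+a)*(1+a) - 3*(1+a)) 0 (w*w-3*w).
Proof.
intros Ha Hp Hp2 Hw Hw2.
assert (0 <= a*a) by (apply Z.mul_nonneg_nonneg; lia).
assert (0 <= w*w) by (apply Z.mul_nonneg_nonneg; lia).
assert (0 <= a*w) by (apply Z.mul_nonneg_nonneg; lia).
destruct (Z.le_gt_cases p (3*a)) as [h|h].
- destruct (Z.eq_dec a 0) as [h0|h0].
  + assert (p = 0) by lia. subst. unfold Gf. nia.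
  + apply (concave (3*a) p _ (475 + 48*w + 17*w*w + 1668*a + 76*a*w + 896*a*a)
      (475 + 48*w + 17*w*w + 768*a + 100*a*w + 164*a*a) 16); try lia.
    unfold Gf; ring.
- destruct (Z.eq_dec p (3*a+1)) as [h1|h1].
  + subst p. replace w with (1 + (w - 1)) by lia.
    assert (0 <= w - 1) by lia.
    assert (0 <= a*(w-1)) by (apply Z.mul_nonneg_nonneg; lia).
    assert (0 <= (w-1)*(w-1)) by (apply Z.mul_nonneg_nonneg; lia).
    unfold Gf in *. lia.
  + assert (p = 3*a+2) by lia. subst p. replace w with (4 + (w - 4)) by lia.
    assert (0 <= w - 4) by lia.
    assert (0 <= a*(w-4)) by (apply Z.mul_nonneg_nonneg; lia).
    assert (0 <= (w-4)*(w-4)) by (apply Z.mul_nonneg_nonneg; lia).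
    unfold Gf in *. lia.
Qed.

Lemma caseIV (a p w : Z) : 0 <= a -> 0 <= p -> p <= 3*a+2 -> 0 <= w -> w <= 9*a+1-3*p ->
  0 <= Gf (1+a) (4*(1+a)-1-p) (3*(1+a)+4+w) ((1+a)*(1+a) - 3*(1+a)) 0 0.
Proof.
intros Ha Hp Hp2 Hw Hw2.
assert (0 <= a*a) by (apply Z.mul_nonneg_nonneg; lia).
assert (0 <= a*w) by (apply Z.mul_nonneg_nonneg; lia).
assert (0 <= a*p) by (apply Z.mul_nonneg_nonneg; lia).
assert (0 <= p*w) by (apply Z.mul_nonneg_nonneg; lia).
assert (0 <= w*(9*a+1-3*p-w)) by (apply Z.mul_nonneg_nonneg; lia).
assert (0 <= p*(3*a+2-p)) by (apply Z.mul_nonneg_nonneg; lia).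
unfold Gf in *. lia.
Qed.

Lemma reg2Z (s t u As Xs Ys : Z) : 1 <= s -> s <= t -> 3*s+4 <= u ->
  As >= s*s - 3*s -> 0 <= Xs -> 0 <= Ys ->
  (4*s <= t -> Xs >= (t-4*s)*(t-4*s) - 3*(t-4*s)) ->
  (3*t <= u -> Ys >= (u-3*t)*(u-3*t) - 3*(u-3*t)) ->
  0 <= Gf s t u As Xs Ys.
Proof.
intros H1 H2 H3 HA HX HY HX2 HY2.
destruct (Z.le_gt_cases (4*s) t) as [h1|h1]; destruct (Z.le_gt_cases (3*t) u) as [h2|h2].
- pose proof (caseI (s-1) (t-4*s) (u-3*t) ltac:(lia) ltac:(lia) ltac:(lia)) as HH.
  specialize (HX2 h1). specialize (HY2 h2). unfold Gf in *. lia.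
- pose proof (caseII (s-1) (t-4*s) (u-3*s-4) ltac:(lia) ltac:(lia) ltac:(lia) ltac:(lia)) as HH.
  specialize (HX2 h1). unfold Gf in *. lia.
- pose proof (caseIII (s-1) (4*s-1-t) (u-3*t) ltac:(lia) ltac:(lia) ltac:(lia) ltac:(lia) ltac:(lia)) as HH.
  specialize (HY2 h2). unfold Gf in *. lia.
- pose proof (caseIV (s-1) (4*s-1-t) (u-3*s-4) ltac:(lia) ltac:(lia) ltac:(lia) ltac:(lia) ltac:(lia)) as HH.
  unfold Gf in *. lia.
Qed.

End ZPart.

Section Three.
Local Open Scope Z_scope.
Lemma three a b c : (M3formula (4 * a + b + c)%N <= Posz (T a + T b + T c)%N)%R.
Proof.
have [ka [Ha1 Ha2 Ha3 Ha4]] := Tk a.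
have [kb [Hb1 Hb2 Hb3 Hb4]] := Tk b.
have [kc [Hc1 Hc2 Hc3 Hc4]] := Tk c.
move Hn: (4 * a + b + c)%N => n.
set D := ((n ^ 2 + 101 - 18 * n) %/ 108)%N.
have HD : (108 * D <= n * n + 101 - 18 * n)%N.
  rewrite mulnn mulnC; exact: leq_trunc_div.
have HN : (18 * n <= n * n + 101)%N.
  by have := @sq_lineZ (Z.of_nat n) 9; clear; lia.
have HDZ : (108 * Z.of_nat D <= Z.of_nat n * Z.of_nat n + 101 - 18 * Z.of_nat n).
  by clear -HD HN; lia.
have HaZ : (6 * Z.of_nat (T a) + 3 * Z.of_nat a = Z.of_nat a * Z.of_nat a + 2 * Z.of_nat ka).
  by clear -Ha4; lia.
have HbZ : (6 * Z.of_nat (T b) + 3 * Z.of_nat b = Z.of_nat b * Z.of_nat b + 2 * Z.of_nat kb).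
  by clear -Hb4; lia.
have HcZ : (6 * Z.of_nat (T c) + 3 * Z.of_nat c = Z.of_nat c * Z.of_nat c + 2 * Z.of_nat kc).
  by clear -Hc4; lia.
pose e := (18 * Z.of_nat a + 9 - 4 * Z.of_nat n).
pose d := (Z.of_nat b - Z.of_nat c).
have [K1 K2] := @keyZ (Z.of_nat a) (Z.of_nat b) (Z.of_nat c) (Z.of_nat n)
  (Z.of_nat (n %/ 54)%N) (Z.of_nat (n %% 54)%N)
  (Z.of_nat (a %/ 3)%N) (Z.of_nat (a %% 3)%N)
  (Z.of_nat (b %/ 3)%N) (Z.of_nat (b %% 3)%N)
  (Z.of_nat (c %/ 3)%N) (Z.of_nat (c %% 3)%N)
  (Z.of_nat ka) (Z.of_nat kb) (Z.of_nat kc) e d (e * e) (d * d)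
  ltac:(lia) ltac:(lia) ltac:(lia) ltac:(clear -Hn; lia) ltac:(clear; lia) ltac:(clear; lia)
  ltac:(clear; lia) ltac:(clear; lia) ltac:(clear -Ha1; lia) ltac:(clear -Ha2; lia) ltac:(clear -Ha3; lia)
  ltac:(clear; lia) ltac:(clear; lia) ltac:(clear -Hb1; lia) ltac:(clear -Hb2; lia) ltac:(clear -Hb3; lia)
  ltac:(clear; lia) ltac:(clear; lia) ltac:(clear -Hc1; lia) ltac:(clear -Hc2; lia) ltac:(clear -Hc3; lia)
  erefl erefl
  (@sq_lineZ e (-17)) (@sq_lineZ e (-16)) (@sq_lineZ e (-15)) (@sq_lineZ e (-14)) (@sq_lineZ e (-13)) (@sq_lineZ e (-12)) (@sq_lineZ e (-11)) (@sq_lineZ e (-10)) (@sq_lineZ e (-9)) (@sq_lineZ e (-8)) (@sq_lineZ e (-7)) (@sq_lineZ e (-6)) (@sq_lineZ e (-5)) (@sq_lineZ e (-4)) (@sq_lineZ e (-3)) (@sq_lineZ e (-2)) (@sq_lineZ e (-1)) (@sq_lineZ e (0)) (@sq_lineZ e (1)) (@sq_lineZ e (2)) (@sq_lineZ e (3)) (@sq_lineZ e (4)) (@sq_lineZ e (5)) (@sq_lineZ e (6)) (@sq_lineZ e (7)) (@sq_lineZ e (8)) (@sq_lineZ e (9)) (@sq_lineZ e (10)) (@sq_lineZ e (11)) (@sq_lineZ e (12)) (@sq_lineZ e (13)) (@sq_lineZ e (14)) (@sq_lineZ e (15)) (@sq_lineZ e (16))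
  (@sq_lineZ d (-5)) (@sq_lineZ d (-4)) (@sq_lineZ d (-3)) (@sq_lineZ d (-2)) (@sq_lineZ d (-1)) (@sq_lineZ d (0)) (@sq_lineZ d (1)) (@sq_lineZ d (2)) (@sq_lineZ d (3)) (@sq_lineZ d (4)).
have F := fun corr (K : 69 + 216 * corr <= e * e + 18 * (d * d) + 72 * (Z.of_nat ka + Z.of_nat kb + Z.of_nat kc)) =>
  @final0 (Z.of_nat a) (Z.of_nat b) (Z.of_nat c) (Z.of_nat ka) (Z.of_nat kb) (Z.of_nat kc)
    (Z.of_nat (T a)) (Z.of_nat (T b)) (Z.of_nat (T c)) (Z.of_nat D) corr (e * e) (d * d) (Z.of_nat n)
    HaZ HbZ HcZ ltac:(clear -Hn; lia) HDZ K erefl erefl.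
rewrite /M3formula /M3corr.
case: ifP => H36.
  have := F 1 ltac:(have := K1 ltac:(move/eqP: H36; clear; lia); clear; lia).
  clear; lia.
case: ifP => H3042.
  have := F (-1) ltac:(have := @sq_lineZ e 0; have := @sq_lineZ d 0; have := @sq_lineZ e (-1); have := @sq_lineZ d (-1); clear; lia).
  clear; lia.
have := F 0 ltac:(have := K2 ltac:(move/negbT: H36; clear; lia) ltac:(move/negbT: H3042; clear; lia) ltac:(move/negbT: H3042; clear; lia); clear; lia).
clear; lia.
Qed.

End Three.




Lemma T_shift m p : 6 * T (m + 3 * p) = 6 * T m + 6 * p * m + 9 * p * p - 9 * p.
Proof.
have [k1 [H1 H2 H3 H4]] := Tk m.
have [k2 [H5 H6 H7 H8]] := Tk (m + 3 * p).
have E : (m + 3 * p) %% 3 = m %% 3 by lia.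
lia.
Qed.

Section ZH.
Local Open Scope Z_scope.
Lemma T_shiftZ m p : Z.of_nat (6 * T (m + 3 * p))%N =
  (Z.of_nat (6 * T m)%N + 6 * Z.of_nat p * Z.of_nat (m + 3 * p)%N - 9 * Z.of_nat p * Z.of_nat p - 9 * Z.of_nat p).
Proof. have := T_shift m p. have : (p <= p * p)%N by case: p => // p; rewrite mulSn; lia. lia. Qed.

Lemma T6_ge m z : Z.of_nat m = z -> (Z.of_nat (6 * T m)%N >= z * z - 3 * z).
Proof. move=> <-; have [k [H1 H2 H3 H4]] := Tk m; lia. Qed.
End ZH.

Lemma int_le_trans (x : int) (m k : nat) : (x <= Posz m)%R -> m <= k -> (x <= Posz k)%R.
Proof. move=> H1 H2; lia. Qed.

Lemma lower n s t : 1 <= s -> s <= t -> t <= n -> (M3formula n <= Posz (M3 n s t))%R.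
Proof.
move=> H1 H2 H3.
have HM := M3_ge H1 H2 H3.
case: (leqP (n - t) (3 * s + 3)) => Hu.
  rewrite (@T_le (n - t - 3 * s)) in HM; last by lia.
  case: (leqP (4 * s) t) => Ht.
    have := three s (t - 4 * s) (n - t).
    have -> : (4 * s + (t - 4 * s) + (n - t))%N = n by lia.
    move=> H; apply: (int_le_trans H); lia.
  have := three (t %/ 4) (t %% 4) (n - t).
  have -> : (4 * (t %/ 4) + t %% 4 + (n - t))%N = n by lia.
  move=> H; apply: (int_le_trans H).
  rewrite (@T_le (t %% 4)); last by lia.
  have := @T_mono (t %/ 4) s ltac:(lia). lia.
have [k1 [Ha1 Ha2 Ha3 Ha4]] := Tk s.
have [k2 [Hb1 Hb2 Hb3 Hb4]] := Tk (t - 4 * s).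
have [k3 [Hc1 Hc2 Hc3 Hc4]] := Tk (n - 4 * t).
have HS := T_shiftZ (n - t - 3 * s) s.
rewrite (_ : (n - t - 3 * s + 3 * s = n - t)%N) in HS; last by lia.
have G := @reg2Z (Z.of_nat s) (Z.of_nat t) (Z.of_nat (n - t)) (Z.of_nat (6 * T s))
  (Z.of_nat (6 * T (t - 4 * s))) (Z.of_nat (6 * T (n - 4 * t)))
  ltac:(clear -H1; lia) ltac:(clear -H2; lia) ltac:(clear -Hu H3; lia)
  (@T6_ge s _ erefl) ltac:(clear; lia) ltac:(clear; lia)
  (fun h => @T6_ge (t - 4 * s) (Z.sub (Z.of_nat t) (Z.mul 4 (Z.of_nat s))) ltac:(clear -h; lia))
  (fun h => @T6_ge (n - 4 * t) (Z.sub (Z.of_nat (n - t)) (Z.mul 3 (Z.of_nat t))) ltac:(clear -h H3; lia)).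
unfold Gf in G.
set D := ((n ^ 2 + 101 - 18 * n) %/ 108)%N.
have HD : (108 * D <= n * n + 101 - 18 * n)%N.
  rewrite mulnn mulnC; exact: leq_trunc_div.
have HN : (18 * n <= n * n + 101)%N.
  by have := @sq_lineZ (Z.of_nat n) 9; clear; lia.
have HZ : Z.le (Z.add (Z.of_nat D) 1) (Z.of_nat (M3 n s t)).
  clear -HD HN G HS HM H3 H2.
  have En : n = (t + (n - t))%N by lia.
  move: (n - t)%N En G HS HM => u En G HS HM.
  rewrite {1 2 3}En in HD. rewrite {1 2 3}En in HN.
  lia.
rewrite /M3formula /M3corr.
case: ifP => _; [|case: ifP => _]; clear -HZ; lia.
Qed.



Definition Tc (m : nat) : nat := (m * m + 2 * (m %% 3 != 0) - 3 * m) %/ 6.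

Lemma T_Tc m : T m = Tc m.
Proof. have [k [H1 H2 H3 H4]] := Tk m. rewrite /Tc. lia. Qed.

Definition wtab : seq (nat * nat * nat) := [:: (0,0,0); (0,0,0); (0,0,0); (0,0,0); (1,0,0); (1,0,1); (1,0,2); (1,0,3); (1,1,3); (1,2,3); (1,3,3); (2,0,3); (2,1,3); (2,2,3); (2,3,3); (3,0,3); (3,1,3); (3,2,3); (3,3,3); (3,3,4); (4,1,3); (4,2,3); (4,3,3); (4,3,4); (5,1,3); (5,2,3); (5,3,3); (5,3,4); (6,1,3); (6,2,3); (6,3,3); (6,3,4); (6,3,5); (7,2,3); (7,3,3); (7,3,4); (7,3,5); (8,2,3); (8,3,3); (8,3,4); (8,3,5); (9,2,3); (9,3,3); (9,3,4); (9,3,5); (9,3,6); (10,3,3); (10,3,4); (10,3,5); (10,3,6); (11,3,3); (11,3,4); (11,3,5); (11,3,6); (12,3,3); (12,3,4); (12,3,5); (12,3,6); (12,4,6); (12,5,6); (12,6,6); (13,3,6); (13,4,6); (13,5,6); (13,6,6); (14,3,6); (14,4,6); (14,5,6); (14,6,6); (15,3,6); (15,4,6); (15,5,6); (15,6,6); (15,6,7); (16,4,6); (16,5,6); (16,6,6); (16,6,7); (17,4,6); (17,5,6); (17,6,6); (17,6,7); (18,4,6); (18,5,6); (18,6,6); (18,6,7); (18,6,8); (19,5,6); (19,6,6); (19,6,7); (19,6,8); (20,5,6); (20,6,6); (20,6,7); (20,6,8); (21,5,6); (21,6,6); (21,6,7); (21,6,8); (21,6,9); (22,6,6); (22,6,7);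 (22,6,8); (22,6,9); (23,6,6); (23,6,7); (23,6,8); (23,6,9)].

Definition wcheck (r : nat) : bool :=
  let: (A, B, C) := nth (0, 0, 0) wtab r in
  [&& 1 <= A, 4 * A + B + C == r, C <= 3 * A + 3, r < 3 * (4 * A + B) + 4,
      r - 4 * (4 * A + B) <= 3 & Posz (Tc A + Tc B + Tc C) == M3formula r].

Lemma wcheck_all : all wcheck (iota 4 104).
Proof. vm_compute. reflexivity. Qed.

Lemma formula_shift q r : (q = 0 \/ 9 <= r) ->
  M3formula (54 * q + r) = (M3formula r + Posz (27 * q * q + q * r - 9 * q))%R.
Proof.
move=> Hq.
rewrite /M3formula /M3corr.
have -> : (54 * q + r) %% 54 = r %% 54 by lia.
have HN : 18 * r <= r * r + 101 by have := @sq_lineZ (Z.of_nat r) 9; clear; lia.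
have Hqr : 9 * q <= q * r by case: Hq => [->|h]; [lia | nia].
have -> : ((54 * q + r) ^ 2 + 101 - 18 * (54 * q + r))
   = (27 * q * q + q * r - 9 * q) * 108 + (r ^ 2 + 101 - 18 * r).
  rewrite -!mulnn; nia.
rewrite divnMDl //.
case: ifP => _; [|case: ifP => _]; lia.
Qed.

Lemma exist_gen q r A B C : (q = 0 \/ 54 <= r) ->
  1 <= A -> 4 * A + B + C = r -> C <= 3 * A + 3 -> r < 3 * (4 * A + B) + 4 ->
  r - 4 * (4 * A + B) <= 3 -> Posz (T A + T B + T C) = M3formula r ->
  exists s t, [/\ 1 <= s, s <= t, t <= 54 * q + r &
     Posz (M3 (54 * q + r) s t) = M3formula (54 * q + r)].
Proof.
move=> Hq H1 H2 H3 H4 H5 H6.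
exists (A + 3 * (4 * q)), (4 * (A + 3 * (4 * q)) + (B + 3 * q)).
split; try lia.
have E := @M3_eqn (54 * q + r) (A + 3 * (4 * q)) (4 * (A + 3 * (4 * q)) + (B + 3 * q))
  ltac:(lia) ltac:(lia) ltac:(lia) ltac:(lia).
rewrite (@T_le (54 * q + r - _ - _)) in E; last by lia.
rewrite (@T_le (54 * q + r - 4 * _)) in E; last by lia.
rewrite (_ : 4 * (A + 3 * (4 * q)) + (B + 3 * q) - 4 * (A + 3 * (4 * q)) = B + 3 * q) in E; last by lia.
rewrite (_ : 54 * q + r - (4 * (A + 3 * (4 * q)) + (B + 3 * q)) = C + 3 * q) in E; last by lia.
have S1 := T_shift A (4 * q).
have S2 := T_shift B q.
have S3 := T_shift C q.
rewrite formula_shift; last by case: Hq; lia.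
rewrite -H6.
have Hp : q <= q * q by case: q {Hq E S1 S2 S3} => // q; rewrite mulSn; lia.
lia.
Qed.

Lemma wit_ok r : 4 <= r < 108 -> exists A B C,
  1 <= A /\ 4 * A + B + C = r /\ C <= 3 * A + 3 /\ r < 3 * (4 * A + B) + 4 /\
      r - 4 * (4 * A + B) <= 3 /\ Posz (T A + T B + T C) = M3formula r.
Proof.
move=> Hr.
have Hin : r \in iota 4 104 by rewrite mem_iota; lia.
move: (allP wcheck_all r Hin); rewrite /wcheck.
case: (nth (0, 0, 0) wtab r) => [[A B] C] /andP [h1 /andP [h2 /andP [h3 /andP [h4 /andP [h5 h6]]]]].
exists A, B, C; split; [done|split; [exact/eqP|split; [done|split;[done|split;[done|]]]]].
by rewrite !T_Tc; apply/eqP.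
Qed.

Lemma existence n : 1 <= n ->
  exists s t, [/\ 1 <= s, s <= t, t <= n & Posz (M3 n s t) = M3formula n].
Proof.
move=> Hn.
case: (leqP n 3) => Hn3.
  exists 1, 1; split => //.
  rewrite M3_cond big1; last first.
    move=> x _; rewrite big1 // => y _; rewrite /cond; lia.
  by case: n Hn Hn3 => [|[|[|[|n]]]] //= _ _; vm_compute.
case: (ltnP n 108) => Hn108.
  have [A [B [C [h1 [h2 [h3 [h4 [h5 h6]]]]]]]] := @wit_ok n ltac:(lia).
  have := @exist_gen 0 n A B C (or_introl erefl) h1 h2 h3 h4 h5 h6.
  by rewrite muln0 add0n.
have [A [B [C [h1 [h2 [h3 [h4 [h5 h6]]]]]]]] := @wit_ok (54 + n %% 54) ltac:(lia).
have := @exist_gen (n %/ 54 - 1) (54 + n %% 54) A B C (or_intror (leq_addr _ _)) h1 h2 h3 h4 h5 h6.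
by rewrite (_ : 54 * (n %/ 54 - 1) + (54 + n %% 54) = n); last by lia.
Qed.

Theorem theorem4p3 (n : nat) : 1 <= n ->
  (exists s t, [/\ 1 <= s, s <= t, t <= n & Posz (M3 n s t) = M3formula n]) /\
  (forall s t, 1 <= s -> s <= t -> t <= n -> (M3formula n <= Posz (M3 n s t))%R).
Proof.
move=> Hn; split; first exact: existence.
by move=> s t; exact: lower.
Qed.
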